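(* Let $\mathfrak g\xrightarrow{\mu}\mathfrak h$ be a crossed module of Lie algebras, $\phi:W\to V$ linear, $\rho$ a 2-representation on $\phi$, and $r\ge1$. Then, as maps $C^{p,q}_r(\mathfrak g_1,\phi)\to C^{p+1,q+1}_r(\mathfrak g_1,\phi)$, $$\delta^{(r)}\partial-\partial\delta^{(r)}=\delta_{(1)}\circ\Delta+\Delta\circ\delta_{(1)}.$$
   Context: Crossed module: Lie algebras $\mathfrak g,\mathfrak h$, Lie homomorphism $\mu$, action $\mathcal L:\mathfrak h\to\mathrm{Der}(\mathfrak g)$ with $\mu(\mathcal L_yx)=[y,\mu(x)]$, $\mathcal L_{\mu(x_0)}x_1=[x_0,x_1]$; $\mathfrak g\oplus_{\mathcal L}\mathfrak h$ has bracket $[(x_0,y_0),(x_1,y_1)]=([x_0,x_1]+\mathcal L_{y_0}x_1-\mathcal L_{y_1}x_0,[y_0,y_1])$. 2-representation: linear $\rho_0^1:\mathfrak h\to\mathfrak{gl}(W)$, $\rho_0^0:\mathfrak h\to\mathfrak{gl}(V)$, $\rho_1:\mathfrak g\to\mathrm{Hom}(V,W)$ with $\rho_0^1,\rho_0^0$ representations, $\phi\rho_0^1(y)=\rho_0^0(y)\phi$, $\rho_1([x_0,x_1])=\rho_1(x_0)\phi\rho_1(x_1)-\rho_1(x_1)\phi\rho_1(x_0)$, $\rho_0^0(\mu(x))=\phi\rho_1(x)$, $\rho_0^1(\mu(x))=\rho_1(x)\phi$, $\rho_1(\mathcal L_yx)=\rho_0^1(y)\rho_1(x)-\rho_1(x)\rho_0^0(y)$.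 $\mathfrak g_0=\mathfrak h$; for $p\ge1$, $\mathfrak g_p=\mathfrak g^p\oplus\mathfrak h$, elements $(x^0,\dots,x^{p-1};y)$, a Lie algebra via identification with composable strings $(a_0,\dots,a_{p-1})\in(\mathfrak g\oplus_{\mathcal L}\mathfrak h)^p$, $a_j=(x^j,y+\sum_{k>j}\mu(x^k))$, componentwise bracket. Face maps $\partial_k:\mathfrak g_{p+1}\to\mathfrak g_p$: $\partial_0(x^0,\dots,x^p;y)=(x^1,\dots,x^p;y)$, $\partial_k(\dots)=(x^0,\dots,x^{k-1}+x^k,\dots,x^p;y)$ ($0<k\le p$), $\partial_{p+1}(\dots)=(x^0,\dots,x^{p-1};y+\mu(x^p))$, componentwise on tuples; $\hat t_p(x^0,\dots,x^{p-1};y)=y+\sum\mu(x^j)$. $X(j),X(m,n)$: removal of entries. $C^{p,q}_r=\bigwedge^q\mathfrak g_p^*\otimes\bigwedge^r\mathfrak g^*\otimes W$ ($r\ge1$), $C^{p,q}_0=\bigwedge^q\mathfrak g_p^*\otimes V$, elements $\omega(\Xi;Z)$. $\delta^{(r)}\omega(\xi_0,\dots,\xi_q;Z)=\sum_j(-1)^j(\rho^{(r)}(\hat t_p(\xi_j))\omega(\Xi(j);\cdot))(Z)+\sum_{m<n}(-1)^{m+n}\omega([\xi_m,\xi_n],\Xi(m,n);Z)$, $(\rho^{(r)}(y)\beta)(x_1,\dots,x_r)=\rho_0^1(y)\beta(x_1,\dots,x_r)-\sum_k\beta(x_1,\dots,\mathcal L_yx_k,\dots,x_r)$ ($r\ge1$),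 $\rho^{(0)}=\rho_0^0$. $\partial\omega(\Xi;Z)=\sum_{k=0}^{p+1}(-1)^k\omega(\partial_k\Xi;Z)$. $\delta_{(1)}:C^{p,q}_r\to C^{p,q}_{r+1}$: for $r=0$, $\delta_{(1)}\omega(\Xi;x)=\rho_1(x)\omega(\Xi)$; for $r\ge1$, $\delta_{(1)}\omega(\Xi;z_0,\dots,z_r)=\sum_k(-1)^k\rho_0^1(\mu(z_k))\omega(\Xi;Z(k))+\sum_{a<b}(-1)^{a+b}\omega(\Xi;[z_a,z_b],Z(a,b))$. $\Delta:C^{p,q}_r\to C^{p+1,q+1}_{r-1}$ ($r\ge1$): for $\Xi=(\xi_0,\dots,\xi_q)\in\mathfrak g_{p+1}^{q+1}$, $\xi_j=(x_j^0,\dots,x_j^p;y_j)$, $\Delta\omega(\Xi;Z)=\sum_j(-1)^j\omega(\partial_0\Xi(j);x_j^0,Z)$, composed with $\phi$ when $r=1$. *)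

(* Defs.v *)
From mathcomp Require Import all_boot all_algebra.
Set Implicit Arguments. Unset Strict Implicit. Unset Printing Implicit Defensive.
Import GRing.Theory.
Local Open Scope ring_scope.

Definition is_lin (K : fieldType) (U X : lmodType K) (f : U -> X) : Prop :=
  forall (a : K) (u v : U), f (a *: u + v) = a *: f u + f v.

Definition is_bilin (K : fieldType) (U1 U2 X : lmodType K)
  (b : U1 -> U2 -> X) : Prop :=
  (forall u, is_lin (b u)) /\ (forall v, is_lin (fun u => b u v)).

Definition lie_algebra (K : fieldType) (G : lmodType K) (bg : G -> G -> G) : Prop :=
  [/\ is_bilin bg,
      (forall x, bg x x = 0) &
      (forall x y z, bg x (bg y z) + bg y (bg z x) + bg z (bg x y) = 0)].

Definition crossed_module (K : fieldType) (G H : lmodType K)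
  (bg : G -> G -> G) (bh : H -> H -> H) (mu : G -> H) (L : H -> G -> G) : Prop :=
  [/\ lie_algebra bg /\ lie_algebra bh,
      (is_lin mu /\ (forall x0 x1, mu (bg x0 x1) = bh (mu x0) (mu x1))),
      [/\ is_bilin L,
          (forall y x0 x1, L y (bg x0 x1) = bg (L y x0) x1 + bg x0 (L y x1)) &
          (forall y0 y1 x, L (bh y0 y1) x = L y0 (L y1 x) - L y1 (L y0 x))],
      (forall y x, mu (L y x) = bh y (mu x)) &
      (forall x0 x1, L (mu x0) x1 = bg x0 x1)].

Definition lie_rep (K : fieldType) (H U : lmodType K) (bh : H -> H -> H)
  (rho : H -> U -> U) : Prop :=
  is_bilin rho /\
  (forall y0 y1 u, rho (bh y0 y1) u = rho y0 (rho y1 u) - rho y1 (rho y0 u)).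

Definition two_rep (K : fieldType) (G H W V : lmodType K)
  (bg : G -> G -> G) (bh : H -> H -> H) (mu : G -> H) (L : H -> G -> G)
  (phi : W -> V) (rho01 : H -> W -> W) (rho00 : H -> V -> V)
  (rho1 : G -> V -> W) : Prop :=
  [/\ is_lin phi /\ lie_rep bh rho01 /\ lie_rep bh rho00 /\ is_bilin rho1,
      (forall y w, phi (rho01 y w) = rho00 y (phi w)),
      (forall x0 x1 v, rho1 (bg x0 x1) v
                       = rho1 x0 (phi (rho1 x1 v)) - rho1 x1 (phi (rho1 x0 v))),
      (forall x v, rho00 (mu x) v = phi (rho1 x v)) /\
      (forall x w, rho01 (mu x) w = rho1 x (phi w)) &
      (forall y x v, rho1 (L y x) v = rho01 y (rho1 x v) - rho1 x (rho00 y v))].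

(* element (x^0,...,x^{p-1}; y) is the pair ([ffun j => x^j], y)     *)

Definition Gp (K : fieldType) (G H : lmodType K) (p : nat) : lmodType K :=
  ({ffun 'I_p -> G} * H)%type.

(* entry n of x (0 if out of range) *)
Definition xat (K : fieldType) (G : lmodType K) (p : nat)
  (x : {ffun 'I_p -> G}) (n : nat) : G :=
  if @insub nat (fun k => k < p)%N _ n is Some i then x i else 0.

Section Simplicial.
Variables (K : fieldType) (G H : lmodType K).
Variables (bg : G -> G -> G) (bh : H -> H -> H) (mu : G -> H) (L : H -> G -> G).

Definition hat_t (p : nat) (xi : Gp G H p) : H :=
  xi.2 + \sum_(j < p) mu (xi.1 j).

(* y-component of the j-th entry a_j of the composable string *)
Definition str_h (p : nat) (xi : Gp G H p) (j : 'I_p) : H :=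
  xi.2 + \sum_(k < p | (j < k)%N) mu (xi.1 k).

(* Bracket of g_p, transported from the componentwise bracket on composable
   strings (a_0,...,a_{p-1}) in (g x|_L h)^p, a_j = (x^j, y + sum_{k>j} mu x^k) *)
Definition brp (p : nat) (xi xi' : Gp G H p) : Gp G H p :=
  ([ffun j => bg (xi.1 j) (xi'.1 j) + L (str_h xi j) (xi'.1 j)
                - L (str_h xi' j) (xi.1 j)],
   bh xi.2 xi'.2).

Definition face (p k : nat) (xi : Gp G H p.+1) : Gp G H p :=
  let x := xat xi.1 in
  if k == 0%N then ([ffun i : 'I_p => x i.+1], xi.2)
  else if (k <= p)%N then
    ([ffun i : 'I_p => if (i < k.-1)%N then x i
                       else if i == k.-1 :> nat then x k.-1 + x k
                       else x i.+1], xi.2)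
  else ([ffun i : 'I_p => x i], xi.2 + mu (x p)).
End Simplicial.

(* Finite argument lists are represented as functions nat -> T; only *)
(* the first q (resp. r) entries are meaningful.                     *)

Definition upd (T : Type) (Z : nat -> T) (k : nat) (v : T) : nat -> T :=
  fun i => if i == k then v else Z i.
Definition pcons (T : Type) (v : T) (Z : nat -> T) : nat -> T :=
  fun i => if i is i'.+1 then Z i' else v.
Definition rem1 (T : Type) (Z : nat -> T) (j : nat) : nat -> T :=
  fun i => Z (bump j i).
(* Z(m,n), m < n: remove entries m and n *)
Definition rem2 (T : Type) (Z : nat -> T) (m n : nat) : nat -> T :=
  fun i => Z (bump n (bump m i)).

(* C^{p,q}_r with values in A (A = W for r >= 1, A = V for r = 0):
   elements of  wedge^q g_p^* (x) wedge^r g^* (x) A, i.e. maps that are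
   multilinear and alternating in the q arguments of g_p and in the
   r arguments of g (and only depend on those arguments). *)
Definition cochain (K : fieldType) (G H A : lmodType K) (p : nat) : Type :=
  (nat -> Gp G H p) -> (nat -> G) -> A.

Definition is_cochain (K : fieldType) (G H A : lmodType K) (p q r : nat)
  (w : cochain G H A p) : Prop :=
  [/\ (forall Xi Xi' Z Z', (forall i, (i < q)%N -> Xi i = Xi' i) ->
          (forall i, (i < r)%N -> Z i = Z' i) -> w Xi Z = w Xi' Z'),
      (forall Xi Z i, (i < q)%N -> is_lin (fun u => w (upd Xi i u) Z)),
      (forall Xi Z i, (i < r)%N -> is_lin (fun x => w Xi (upd Z i x))),
      (forall Xi Z i j, (i < j < q)%N -> Xi i = Xi j -> w Xi Z = 0) &
      (forall Xi Z i j, (i < j < r)%N -> Z i = Z j -> w Xi Z = 0)].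

Section Operators.
Variables (K : fieldType) (G H W V : lmodType K).
Variables (bg : G -> G -> G) (bh : H -> H -> H) (mu : G -> H) (L : H -> G -> G).
Variables (phi : W -> V) (rho01 : H -> W -> W) (rho00 : H -> V -> V)
          (rho1 : G -> V -> W).

Definition sgn (n : nat) : K := (-1) ^+ n.

Definition rho_r (r : nat) (y : H) (beta : (nat -> G) -> W) : (nat -> G) -> W :=
  fun Z => rho01 y (beta Z) - \sum_(k < r) beta (upd Z k (L y (Z k))).

Definition delta_r (p q r : nat) (w : cochain G H W p) : cochain G H W p :=
  fun Xi Z =>
    \sum_(j < q.+1) sgn j *:
        rho_r r (hat_t mu (Xi j)) (w (rem1 Xi j)) Z
  + \sum_(m < q.+1) \sum_(n < q.+1 | (m < n)%N)
        sgn (m + n) *: w (pcons (brp bg bh mu L (Xi m) (Xi n)) (rem2 Xi m n)) Z.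

Definition pdiff (A : lmodType K) (p : nat) (w : cochain G H A p)
  : cochain G H A p.+1 :=
  fun Xi Z => \sum_(k < p.+2) sgn k *: w (fun i => face mu k (Xi i)) Z.

Definition d1_0 (p : nat) (w : cochain G H V p) : cochain G H W p :=
  fun Xi Z => rho1 (Z 0%N) (w Xi (fun _ => 0)).

Definition d1 (p r : nat) (w : cochain G H W p) : cochain G H W p :=
  fun Xi Z =>
    \sum_(k < r.+1) sgn k *: rho01 (mu (Z k)) (w Xi (rem1 Z k))
  + \sum_(a < r.+1) \sum_(b < r.+1 | (a < b)%N)
        sgn (a + b) *: w Xi (pcons (bg (Z a) (Z b)) (rem2 Z a b)).

Definition x0 (p : nat) (xi : Gp G H p.+1) : G := xi.1 ord0.

Definition Delta (p q : nat) (w : cochain G H W p) : cochain G H W p.+1 :=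
  fun Xi Z => \sum_(j < q.+1) sgn j *:
      w (fun i => face mu 0 (rem1 Xi j i)) (pcons (x0 (Xi j)) Z).

(* Delta : C^{p,q}_1 -> C^{p+1,q+1}_0, composed with phi *)
Definition Delta_1 (p q : nat) (w : cochain G H W p) : cochain G H V p.+1 :=
  fun Xi Z => \sum_(j < q.+1) sgn j *:
      phi (w (fun i => face mu 0 (rem1 Xi j i)) (pcons (x0 (Xi j)) Z)).
End Operators.

(* Main.v *)
Require Import Defs.
From mathcomp Require Import all_boot all_algebra zify.
Import GRing.Theory.
Local Open Scope ring_scope.
Set Implicit Arguments. Unset Strict Implicit. Unset Printing Implicit Defensive.

Section Lin.
Variables (K : fieldType) (U X : lmodType K) (f : U -> X).
Hypothesis hf : is_lin f.
Lemma lin0 : f 0 = 0.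
Proof. have := hf 1 0 0; rewrite !scale1r !addr0 => /(congr1 (fun z => z - f 0)); rewrite subrr addrK. by move=> <-. Qed.
Lemma linD u v : f (u + v) = f u + f v.
Proof. by have := hf 1 u v; rewrite !scale1r. Qed.
Lemma linZ a u : f (a *: u) = a *: f u.
Proof. by have := hf a u 0; rewrite !addr0 lin0 addr0. Qed.
Lemma linN u : f (- u) = - f u.
Proof. by rewrite -scaleN1r linZ scaleN1r. Qed.
Lemma linB u v : f (u - v) = f u - f v.
Proof. by rewrite linD linN. Qed.
Lemma lin_sum I (s : seq I) P (F : I -> U) :
  f (\sum_(i <- s | P i) F i) = \sum_(i <- s | P i) f (F i).
Proof. exact: (big_morph f linD lin0). Qed.
End Lin.

Lemma xatE (K : fieldType) (G : lmodType K) p (x : {ffun 'I_p -> G}) (i : 'I_p) :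
  xat x i = x i.
Proof. by rewrite /xat insubT // => h; congr (x _); apply: val_inj. Qed.

Lemma xatE' (K : fieldType) (G : lmodType K) p (x : {ffun 'I_p -> G}) n (h : (n < p)%N) :
  xat x n = x (Ordinal h).
Proof. by rewrite -xatE. Qed.

Lemma xat_out (K : fieldType) (G : lmodType K) p (x : {ffun 'I_p -> G}) n :
  (p <= n)%N -> xat x n = 0.
Proof. by move=> h; rewrite /xat insubF // ltnNge h. Qed.

Lemma pull_step (M : zmodType) (A A' u t : M) : A = A' + t -> A + u = (A' + u) + t.
Proof. by move=> ->; rewrite addrAC. Qed.
Ltac pull t X :=
  match X with
  | ?A + ?u => let _ := constr:(erefl u : u = t) in constr:(erefl X)
  | ?A + ?u => let pf := pull t A in constr:(@pull_step _ _ _ u _ pf)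
  | _ => let _ := constr:(erefl X : X = t) in constr:(esym (@add0r _ X))
  end.
Ltac zperm :=
  lazymatch goal with
  | |- ?X = ?Y + ?t => let pf := pull t X in
       apply: (etrans pf); apply: (congr1 (fun z => z + t)); zperm
  | |- ?X = ?t => first [ reflexivity | let pf := pull t X in
       apply: (etrans pf); rewrite add0r; zperm ]
  end.
Ltac znorm := rewrite ?opprD ?opprK ?addrA.

Lemma fin_alg (M : zmodType) (t d a b : M) : d + a + b = 0 -> t = d + (t + a + b).
Proof.
move=> e; have -> : d + (t + a + b) = t + (d + a + b) by znorm; zperm.
by rewrite e addr0.
Qed.
Lemma fin_alg1 (M : zmodType) (t d a b : M) : d + a = 0 -> b = 0 -> t = d + (t + a + b).
Proof.
move=> e ->; rewrite addr0; have -> : d + (t + a) = t + (d + a) by znorm; zperm.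
by rewrite e addr0.
Qed.


Section Bil.
Variables (K : fieldType) (U1 U2 X : lmodType K) (b : U1 -> U2 -> X).
Hypothesis hb : is_bilin b.
Lemma blDl u u' v : b (u + u') v = b u v + b u' v. Proof. exact: (linD (hb.2 v) u u'). Qed.
Lemma blDr u v v' : b u (v + v') = b u v + b u v'. Proof. exact: (linD (hb.1 u) v v'). Qed.
Lemma blBl u u' v : b (u - u') v = b u v - b u' v. Proof. exact: (linB (hb.2 v) u u'). Qed.
Lemma blBr u v v' : b u (v - v') = b u v - b u v'. Proof. exact: (linB (hb.1 u) v v'). Qed.
Lemma bl0l v : b 0 v = 0. Proof. exact: (lin0 (hb.2 v)). Qed.
Lemma bl0r u : b u 0 = 0. Proof. exact: (lin0 (hb.1 u)). Qed.
Lemma blZr u a v : b u (a *: v) = a *: b u v. Proof. exact: (linZ (hb.1 u) a v). Qed.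
Lemma blNr u v : b u (- v) = - b u v. Proof. exact: (linN (hb.1 u) v). Qed.
Lemma blsumr u I (s : seq I) P (F : I -> U2) :
  b u (\sum_(i <- s | P i) F i) = \sum_(i <- s | P i) b u (F i).
Proof. exact: (lin_sum (hb.1 u)). Qed.
End Bil.

Lemma lie_anti (K : fieldType) (G : lmodType K) (bg : G -> G -> G) :
  lie_algebra bg -> forall x y, bg x y = - bg y x.
Proof.
case=> hb h0 _ x y; have := h0 (x + y).
rewrite (blDl hb) !(blDr hb) !h0 add0r addr0 => /eqP; rewrite addr_eq0 => /eqP //.
Qed.

Section Faces.
Variables (K : fieldType) (G H : lmodType K).
Variables (bg : G -> G -> G) (bh : H -> H -> H) (mu : G -> H) (L : H -> G -> G).
Hypothesis hmu : is_lin mu.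

Definition strn p (xi : Gp G H p) (j : nat) :=
  xi.2 + \sum_(j.+1 <= n < p) mu (xat xi.1 n).

Lemma str_hE p (xi : Gp G H p) j :
  str_h mu xi j = strn xi j.
Proof.
rewrite /str_h /strn big_geq_mkord; congr (_ + _).
by apply: eq_big => [i|i _] //; rewrite xatE.
Qed.

Lemma hat_tE p (xi : Gp G H p) :
  hat_t mu xi = xi.2 + \sum_(0 <= n < p) mu (xat xi.1 n).
Proof. by rewrite /hat_t big_mkord; congr (_ + _); apply: eq_bigr => i _; rewrite xatE. Qed.

Lemma face_ent p k (xi : Gp G H p.+1) n : (n < p)%N ->
  xat (face mu k xi).1 n =
  if k == 0%N then xat xi.1 n.+1 else if (k <= p)%N then
    (if (n < k.-1)%N then xat xi.1 n else if n == k.-1 then xat xi.1 k.-1 + xat xi.1 k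
     else xat xi.1 n.+1) else xat xi.1 n.
Proof.
move=> h; rewrite (xatE' _ h) /face.
by case: (k == 0%N) => /=; [|case: (k <= p)%N] => /=; rewrite ffunE.
Qed.

Lemma face_snd p k (xi : Gp G H p.+1) :
  (face mu k xi).2 = if (k <= p)%N then xi.2 else xi.2 + mu (xat xi.1 p).
Proof. by rewrite /face; case: k => [|k] //=; case: ifP. Qed.

Lemma sum_face0 p (xi : Gp G H p.+1) a :
  \sum_(a <= n < p) mu (xat (face mu 0 xi).1 n) = \sum_(a.+1 <= n < p.+1) mu (xat xi.1 n).
Proof.
rewrite big_add1; apply: eq_big_nat => n /andP[_ h].
by rewrite face_ent.
Qed.

Lemma sum_faceL p (xi : Gp G H p.+1) a :
  \sum_(a <= n < p) mu (xat (face mu p.+1 xi).1 n) = \sum_(a <= n < p) mu (xat xi.1 n).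
Proof.
apply: eq_big_nat => n /andP[_ h].
by rewrite face_ent // ltnn.
Qed.

Lemma sum_faceM p (xi : Gp G H p.+1) k a : (0 < k <= p)%N -> (a <= k.-1)%N ->
  \sum_(a <= n < p) mu (xat (face mu k xi).1 n) = \sum_(a <= n < p.+1) mu (xat xi.1 n).
Proof.
case/andP=> k0 kp ak; have k0' : (k == 0%N) = false by apply/negbTE; rewrite -lt0n.
have k1p : (k.-1 <= p)%N by rewrite (leq_trans (leq_pred k)).
rewrite (@big_cat_nat _ _ _ k.-1) // [RHS](@big_cat_nat _ _ _ k.-1) //; last by rewrite (leq_trans k1p).
congr (_ + _).
  apply: eq_big_nat => n /andP[_ h].
  by rewrite face_ent ?(leq_trans h) // k0' kp.
have k1p' : (k.-1 < p)%N by rewrite (leq_trans _ kp) // prednK.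
rewrite big_ltn // [RHS]big_ltn ?ltnS // face_ent // k0' kp ltnn eqxx.
rewrite prednK //= (linD hmu) -addrA; congr (_ + _); rewrite [RHS]big_ltn ?ltnS //=; congr (_ + _).
rewrite [RHS]big_add1 /=; apply: eq_big_nat => n /andP[h1 h2].
rewrite face_ent // k0' kp.
have -> : (n < k.-1)%N = false by apply/negbTE; rewrite -leqNgt (leq_trans (leq_pred k)).
by have -> : (n == k.-1) = false by apply/negbTE; rewrite neq_ltn orbC (leq_trans _ h1) // prednK.
Qed.

Lemma sum_faceM2 p (xi : Gp G H p.+1) k a : (0 < k <= p)%N -> (k <= a)%N ->
  \sum_(a <= n < p) mu (xat (face mu k xi).1 n) = \sum_(a.+1 <= n < p.+1) mu (xat xi.1 n).
Proof.
case/andP=> k0 kp ak; have k0' : (k == 0%N) = false by apply/negbTE; rewrite -lt0n.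
rewrite big_add1 /=; apply: eq_big_nat => n /andP[h1 h2].
rewrite face_ent // k0' kp.
have -> : (n < k.-1)%N = false.
  by apply/negbTE; rewrite -leqNgt (leq_trans _ (leq_trans ak h1)) // leq_pred.
have -> : (n == k.-1) = false.
  by apply/negbTE; rewrite neq_ltn orbC (leq_trans _ (leq_trans ak h1)) // prednK.
by [].
Qed.

Lemma x0E p (xi : Gp G H p.+1) : x0 xi = xat xi.1 0.
Proof. by rewrite /x0 -xatE. Qed.

Lemma hat_face0 p (xi : Gp G H p.+1) :
  hat_t mu (face mu 0 xi) = hat_t mu xi - mu (x0 xi).
Proof.
rewrite !hat_tE face_snd /= sum_face0 [in RHS]big_ltn // x0E.
by rewrite addrCA [RHS]addrC addKr.
Qed.

Lemma hat_faceS p (xi : Gp G H p.+1) k : (0 < k <= p.+1)%N ->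
  hat_t mu (face mu k xi) = hat_t mu xi.
Proof.
case/andP=> k0 kp; rewrite !hat_tE face_snd.
case: (ltngtP k p.+1) kp => // [kp _|-> _].
  by rewrite -ltnS kp sum_faceM // k0 -ltnS.
by rewrite ltnn sum_faceL big_nat_recr //= -addrA [mu _ + _]addrC.
Qed.

Lemma str_face p (xi : Gp G H p.+1) k i : (k <= p.+1)%N -> (i < p)%N ->
  strn (face mu k xi) i = strn xi (if (i < k.-1)%N then i else i.+1).
Proof.
move=> kp ip; rewrite /strn face_snd.
case: k kp => [|k] kp.
  by rewrite /= sum_face0.
move: kp; rewrite ltnS leq_eqVlt => /orP[/eqP->|kp].
  by rewrite ltnn /= ip sum_faceL big_nat_recr //= -addrA [mu _ + _]addrC.
rewrite kp /=; case: ifP => h.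
  by rewrite sum_faceM //= ltnS kp.
by rewrite sum_faceM2 //= ?ltnS ?kp // leqNgt h.
Qed.

Lemma str_succ p (xi : Gp G H p.+1) j : (j < p)%N ->
  strn xi j = strn xi j.+1 + mu (xat xi.1 j.+1).
Proof.
by move=> h; rewrite /strn big_ltn // addrAC addrA.
Qed.
End Faces.


Section FaceBrp.
Variables (K : fieldType) (G H : lmodType K).
Variables (bg : G -> G -> G) (bh : H -> H -> H) (mu : G -> H) (L : H -> G -> G).
Hypotheses (hmu : is_lin mu) (hbg : is_bilin bg) (hbh : is_bilin bh) (hL : is_bilin L).
Hypotheses (bg_anti : forall x y, bg x y = - bg y x) (bh_anti : forall x y, bh x y = - bh y x).
Hypotheses (mu_hom : forall x0 x1, mu (bg x0 x1) = bh (mu x0) (mu x1))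
           (mu_L : forall y x, mu (L y x) = bh y (mu x))
           (L_mu : forall x0 x1, L (mu x0) x1 = bg x0 x1).

Lemma brp_ent p (xi xi' : Gp G H p) n : (n < p)%N ->
  xat (brp bg bh mu L xi xi').1 n = bg (xat xi.1 n) (xat xi'.1 n)
     + L (strn mu xi n) (xat xi'.1 n) - L (strn mu xi' n) (xat xi.1 n).
Proof. by move=> h; rewrite /brp !(xatE' _ h) ffunE !str_hE. Qed.

Lemma face_brp1 p k (xi xi' : Gp G H p.+1) : (k <= p.+1)%N ->
  (face mu k (brp bg bh mu L xi xi')).1 = (brp bg bh mu L (face mu k xi) (face mu k xi')).1.
Proof.
move=> kp; apply/ffunP => i; have ip1 : (i < p.+1)%N := leqW (ltn_ord i).
rewrite -[LHS]xatE face_ent // [in RHS]/brp [RHS]/= ffunE !str_hE !str_face //.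
rewrite -[(face mu k xi).1 i]xatE -[(face mu k xi').1 i]xatE !face_ent //.
case: k kp => [|k] kp.
  by rewrite eqxx !brp_ent // ltnS.
rewrite -[k.+1 == 0%N]/false -[k.+1.-1]/k.
move: kp; rewrite ltnS leq_eqVlt => /orP[/eqP->|kp].
  by rewrite ltnn (ltn_ord i) brp_ent // leqW.
rewrite kp; case: (ltngtP i k) => h.
- by rewrite !brp_ent // (leq_trans h).
- by rewrite !brp_ent // ltnS.
rewrite h !brp_ent // ?ltnS ?(ltnW kp) //.
rewrite [strn mu xi k]str_succ // [strn mu xi' k]str_succ //.
rewrite !(blDl hL) !(blDl hbg) !(blDr hbg) !(blDr hL) !L_mu [bg (xat xi'.1 k.+1) _]bg_anti.
by znorm; zperm.
Qed.

Lemma face_brp2 p k (xi xi' : Gp G H p.+1) :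
  (face mu k (brp bg bh mu L xi xi')).2 = (brp bg bh mu L (face mu k xi) (face mu k xi')).2.
Proof.
rewrite /= !face_snd /=; case: ifP => // _.
rewrite brp_ent // /strn !big_geq // !addr0 (linB hmu) (linD hmu) mu_hom !mu_L.
rewrite !(blDl hbh) !(blDr hbh) [bh (mu _) xi'.2]bh_anti.
by znorm; zperm.
Qed.

Lemma face_brp p k (xi xi' : Gp G H p.+1) : (k <= p.+1)%N ->
  face mu k (brp bg bh mu L xi xi') = brp bg bh mu L (face mu k xi) (face mu k xi').
Proof.
move=> kp; apply: injective_projections; [exact: face_brp1 | exact: face_brp2].
Qed.
End FaceBrp.


Lemma sgnS (K : fieldType) n : sgn K n.+1 = - sgn K n.
Proof. by rewrite /sgn exprS mulN1r. Qed.
Lemma sgnD (K : fieldType) m n : sgn K (m + n) = sgn K m * sgn K n.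
Proof. by rewrite /sgn exprD. Qed.
Lemma sgn0 (K : fieldType) : sgn K 0 = 1.
Proof. by []. Qed.

Lemma bumpSS h k : bump h.+1 k.+1 = (bump h k).+1.
Proof. by rewrite /bump ltnS addnS. Qed.
Lemma bump0 k : bump 0 k = k.+1.
Proof. by []. Qed.

Section Coch.
Variables (K : fieldType) (G H A : lmodType K) (p q r : nat) (w : cochain G H A p).
Hypothesis hw : is_cochain q r w.

Lemma wext Xi Xi' Z Z' : (forall i, Xi i = Xi' i) -> (forall i, Z i = Z' i) ->
  w Xi Z = w Xi' Z'.
Proof. by case: hw => h _ _ _ _ e1 e2; apply: h => i _. Qed.

Lemma wextr Xi Z Z' : (forall i, (i < r)%N -> Z i = Z' i) -> w Xi Z = w Xi Z'.
Proof. by case: hw => h _ _ _ _ e; apply: h. Qed.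

Lemma wlin Xi Z i : (i < r)%N -> is_lin (fun x => w Xi (upd Z i x)).
Proof. by case: hw => _ _ h _ _; apply: h. Qed.

Lemma w_swap Xi Y i a b : (i.+1 < r)%N ->
  w Xi (upd (upd Y i a) i.+1 b) = - w Xi (upd (upd Y i b) i.+1 a).
Proof.
move=> ir; have ir' : (i < r)%N by rewrite ltnW.
pose F u v := w Xi (upd (upd Y i u) i.+1 v).
have F0 u : F u u = 0.
  case: hw => _ _ _ _ h; apply: (h _ _ i i.+1); first by rewrite ltnSn ir.
  by rewrite /upd eqxx (ltn_eqF (ltnSn i)) eqxx.
have FDr u v v' : F u (v + v') = F u v + F u v' by rewrite /F (linD (wlin _ _ ir)).
have Fsw u v : F u v = w Xi (upd (upd Y i.+1 v) i u).
  apply: wext => // j; rewrite /upd; case: (eqVneq j i.+1) => [->|//].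
  by rewrite eq_sym (ltn_eqF (ltnSn i)).
have FDl u u' v : F (u + u') v = F u v + F u' v by rewrite !Fsw (linD (wlin _ _ ir')).
have := F0 (a + b); rewrite FDl !FDr !F0 add0r addr0 => /eqP; rewrite addr_eq0 => /eqP.
by rewrite /F.
Qed.

Lemma w_shift Xi b : (b < r)%N -> forall Z v,
  w Xi (pcons v (rem1 Z b)) = sgn K b *: w Xi (upd Z b v).
Proof.
elim: b => [|b IH] br Z v.
  rewrite sgn0 scale1r; apply: wext => // [[|i]] //.
have br' : (b < r)%N by rewrite ltnW.
pose Z' := upd (upd Z b (Z b.+1)) b.+1 (Z b).
have -> : w Xi (pcons v (rem1 Z b.+1)) = w Xi (pcons v (rem1 Z' b)).
  apply: wext => // [[|j]] //=; rewrite /rem1 /Z' /upd.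
  case: (ltngtP j b) => h.
  - have -> : bump b.+1 j = j by rewrite /bump; lia.
    have -> : bump b j = j by rewrite /bump; lia.
    have -> : (j == b.+1) = false by lia.
    by have -> : (j == b) = false by lia.
  - have -> : bump b.+1 j = j.+1 by rewrite /bump; lia.
    have -> : bump b j = j.+1 by rewrite /bump; lia.
    have -> : (j.+1 == b.+1) = false by lia.
    by have -> : (j.+1 == b) = false by lia.
  - subst j; have -> : bump b.+1 b = b by rewrite /bump; lia.
    have -> : bump b b = b.+1 by rewrite /bump; lia.
    by rewrite eqxx.
rewrite IH // sgnS scaleNr -scalerN; congr (_ *: _).
have -> : w Xi (upd Z' b v) = w Xi (upd (upd Z b v) b.+1 (Z b)).
  apply: wext => // j; rewrite /Z' /upd.
  case: (eqVneq j b) => [->|jb]; first by have -> : (b == b.+1) = false by lia.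
  by case: (eqVneq j b.+1).
rewrite w_swap //; congr (- _); apply: wext => // j; rewrite /upd.
case: (eqVneq j b.+1) => // _; case: (eqVneq j b) => [->|] //.
Qed.
End Coch.


Section Main.
Variables (K : fieldType) (G H W V : lmodType K).
Variables (bg : G -> G -> G) (bh : H -> H -> H) (mu : G -> H) (L : H -> G -> G).
Variables (phi : W -> V) (rho01 : H -> W -> W) (rho00 : H -> V -> V) (rho1 : G -> V -> W).
Hypotheses (hmu : is_lin mu) (hbg : is_bilin bg) (hbh : is_bilin bh) (hL : is_bilin L).
Hypotheses (bg_anti : forall x y, bg x y = - bg y x) (bh_anti : forall x y, bh x y = - bh y x).
Hypotheses (mu_hom : forall x0 x1, mu (bg x0 x1) = bh (mu x0) (mu x1))
           (mu_L : forall y x, mu (L y x) = bh y (mu x))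
           (L_mu : forall x0 x1, L (mu x0) x1 = bg x0 x1).
Hypotheses (hrho01 : is_bilin rho01) (hrho1 : is_bilin rho1) (hphi : is_lin phi)
           (rho01_mu : forall x v, rho01 (mu x) v = rho1 x (phi v)).

Variables (p q r : nat) (w : cochain G H W p).
Hypothesis hw : is_cochain q r w.

Lemma rho_r_sum y n (c : 'I_n -> K) (B : 'I_n -> (nat -> G) -> W) Z :
  rho_r L rho01 r y (fun Z => \sum_(k < n) c k *: B k Z) Z
  = \sum_(k < n) c k *: rho_r L rho01 r y (B k) Z.
Proof.
rewrite /rho_r (blsumr hrho01).
under eq_bigr => k _ do rewrite (blZr hrho01).
under [in RHS]eq_bigr => k _ do rewrite scalerBr.
rewrite sumrB; congr (_ - _).
rewrite /= exchange_big; apply: eq_bigr => k _.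
by rewrite scaler_sumr.
Qed.

Lemma rho_r_diff y y' Xi Z :
  rho_r L rho01 r y (w Xi) Z - rho_r L rho01 r y' (w Xi) Z
  = rho_r L rho01 r (y - y') (w Xi) Z.
Proof.
rewrite /rho_r (blBl hrho01).
have -> : \sum_(k < r) w Xi (upd Z k (L (y - y') (Z k)))
   = \sum_(k < r) w Xi (upd Z k (L y (Z k))) - \sum_(k < r) w Xi (upd Z k (L y' (Z k))).
  rewrite -sumrB; apply: eq_bigr => k _.
  by rewrite (blBl hL) (linB (wlin hw _ _ (ltn_ord k))).
by znorm; zperm.
Qed.

Lemma lhs_red Xi Z :
  delta_r bg bh mu L rho01 q r (pdiff mu w) Xi Z
    - pdiff mu (delta_r bg bh mu L rho01 q r w) Xi Z
  = \sum_(j < q.+1) sgn K j *: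
      rho_r L rho01 r (mu (x0 (Xi j))) (w (fun i => face mu 0 (rem1 Xi j i))) Z.
Proof.
set D2 := fun k : 'I_p.+2 => \sum_(m < q.+1) \sum_(n < q.+1 | (m < n)%N)
   sgn K (m + n) *: w (pcons (brp bg bh mu L (face mu k (Xi m)) (face mu k (Xi n)))
                        (rem2 (fun i => face mu k (Xi i)) m n)) Z.
have eD : pdiff mu (delta_r bg bh mu L rho01 q r w) Xi Z =
  \sum_(k < p.+2) sgn K k *: (\sum_(j < q.+1) sgn K j *:
      rho_r L rho01 r (hat_t mu (face mu k (Xi j))) (w (fun i => face mu k (rem1 Xi j i))) Z
    + D2 k) by [].
have eE : delta_r bg bh mu L rho01 q r (pdiff mu w) Xi Z =
  \sum_(j < q.+1) sgn K j *: \sum_(k < p.+2) sgn K k *: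
      rho_r L rho01 r (hat_t mu (Xi j)) (w (fun i => face mu k (rem1 Xi j i))) Z
  + \sum_(k < p.+2) sgn K k *: D2 k.
  rewrite /delta_r; congr (_ + _).
    by apply: eq_bigr => j _; congr (_ *: _); exact: rho_r_sum.
  rewrite /pdiff /D2.
  transitivity (\sum_(m < q.+1) \sum_(n < q.+1 | (m < n)%N) \sum_(k < p.+2)
    (sgn K (m + n) * sgn K k) *: w (pcons (brp bg bh mu L (face mu k (Xi m)) (face mu k (Xi n)))
                        (rem2 (fun i => face mu k (Xi i)) m n)) Z).
    apply: eq_bigr => m _; apply: eq_bigr => n _; rewrite scaler_sumr.
    apply: eq_bigr => k _; rewrite scalerA; congr (_ *: _).
    apply: (wext hw) => // [[|i]] //=.
    by rewrite face_brp // -ltnS.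
  under eq_bigr => m _ do rewrite exchange_big.
  rewrite exchange_big; apply: eq_bigr => k _; rewrite scaler_sumr.
  apply: eq_bigr => m _; rewrite scaler_sumr; apply: eq_bigr => n _.
  by rewrite scalerA mulrC.
rewrite eE eD.
under [X in _ - X]eq_bigr => k _ do rewrite scalerDr.
rewrite big_split /= opprD addrACA subrr addr0.
have -> : \sum_(i < p.+2) sgn K i *: \sum_(j < q.+1) sgn K j *:
        rho_r L rho01 r (hat_t mu (face mu i (Xi j)))
          (w (fun i0 : nat => face mu i (rem1 Xi j i0))) Z
   = \sum_(j < q.+1) sgn K j *: \sum_(i < p.+2) sgn K i *:
        rho_r L rho01 r (hat_t mu (face mu i (Xi j)))
          (w (fun i0 : nat => face mu i (rem1 Xi j i0))) Z.
  under eq_bigr => i _ do rewrite scaler_sumr.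
  rewrite exchange_big; apply: eq_bigr => j _; rewrite scaler_sumr.
  by apply: eq_bigr => i _; rewrite !scalerA mulrC.
rewrite -sumrB; apply: eq_bigr => j _; rewrite -scalerBr -sumrB; congr (_ *: _).
under eq_bigr => k _ do rewrite -scalerBr.
rewrite big_ord_recl big1 ?addr0 => [|k _].
  by rewrite /= sgn0 scale1r rho_r_diff // hat_face0 // opprB addrC subrK.
rewrite hat_faceS ?subrr ?scaler0 //.
by rewrite lift0 ltnS /=.
Qed.

Lemma d1_pcons Xi x Z :
  d1 bg mu rho01 r w Xi (pcons x Z) =
  rho_r L rho01 r (mu x) (w Xi) Z
  + \sum_(k < r) sgn K k.+1 *: rho01 (mu (Z k)) (w Xi (pcons x (rem1 Z k)))
  + \sum_(a < r) \sum_(b < r | (a < b)%N)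
       sgn K (a + b) *: w Xi (pcons (bg (Z a) (Z b)) (pcons x (rem2 Z a b))).
Proof.
rewrite /d1.
have -> : \sum_(k < r.+1) sgn K k *: rho01 (mu (pcons x Z k)) (w Xi (rem1 (pcons x Z) k))
   = rho01 (mu x) (w Xi Z)
     + \sum_(k < r) sgn K k.+1 *: rho01 (mu (Z k)) (w Xi (pcons x (rem1 Z k))).
  rewrite big_ord_recl; congr (_ + _).
    by rewrite /= sgn0 scale1r.
  apply: eq_bigr => k _; rewrite lift0; congr (_ *: rho01 _ _).
  by apply: (wext hw) => // [[|i]] //=; rewrite /rem1 bumpSS.
have -> : \sum_(a < r.+1) \sum_(b < r.+1 | (a < b)%N) sgn K (a + b) *:
      w Xi (pcons (bg (pcons x Z a) (pcons x Z b)) (rem2 (pcons x Z) a b))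
   = \sum_(k < r) sgn K k.+1 *: w Xi (pcons (bg x (Z k)) (rem1 Z k))
     + \sum_(a < r) \sum_(b < r | (a < b)%N)
       sgn K (a + b) *: w Xi (pcons (bg (Z a) (Z b)) (pcons x (rem2 Z a b))).
  rewrite big_ord_recl; congr (_ + _).
    rewrite big_mkcond big_ord_recl /= add0r; apply: eq_bigr => k _; rewrite bump0 !add0n.
    congr (_ *: _); apply: (wext hw) => // [[|i]] //=.
    by rewrite /rem2 /rem1 bumpSS.
  apply: eq_bigr => a _; rewrite big_mkcond big_ord_recl /= add0r [RHS]big_mkcond.
  apply: eq_bigr => b _; rewrite ?lift0 ?bump0 ltnS addSn addnS !sgnS opprK.
  case: ifP => // _; congr (_ *: _); apply: (wext hw) => // [[|i]] //=.
  case: i => [|i] //=.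
  by rewrite /rem2 !bumpSS.
have -> : \sum_(k < r) sgn K k.+1 *: w Xi (pcons (bg x (Z k)) (rem1 Z k))
    = - \sum_(k < r) w Xi (upd Z k (L (mu x) (Z k))).
  rewrite -sumrN; apply: eq_bigr => k _.
  by rewrite (w_shift hw) // sgnS scaleNr /sgn signrZK L_mu.
rewrite /rho_r.
by znorm; zperm.
Qed.

Lemma w_swap01 Xi a b R : (1 < r)%N ->
  w Xi (pcons a (pcons b R)) = - w Xi (pcons b (pcons a R)).
Proof.
move=> ir.
transitivity (w Xi (upd (upd (pcons 0 (pcons 0 R)) 0 a) 1 b)).
  by apply: (wext hw) => // [[|[|i]]].
rewrite (w_swap hw) //; congr (- _).
by apply: (wext hw) => // [[|[|i]]].
Qed.

Definition Tt (Xi : nat -> Gp G H p.+1) (Z : nat -> G) := \sum_(j < q.+1) sgn K j *: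
      rho_r L rho01 r (mu (x0 (Xi j))) (w (fun i => face mu 0 (rem1 Xi j i))) Z.
Definition C1 (Xi : nat -> Gp G H p.+1) (Z : nat -> G) := \sum_(j < q.+1) sgn K j *:
  \sum_(k < r) sgn K k.+1 *: rho01 (mu (Z k))
     (w (fun i => face mu 0 (rem1 Xi j i)) (pcons (x0 (Xi j)) (rem1 Z k))).
Definition C2 (Xi : nat -> Gp G H p.+1) (Z : nat -> G) := \sum_(j < q.+1) sgn K j *:
  \sum_(a < r) \sum_(b < r | (a < b)%N) sgn K (a + b) *:
     w (fun i => face mu 0 (rem1 Xi j i))
       (pcons (bg (Z a) (Z b)) (pcons (x0 (Xi j)) (rem2 Z a b))).

Lemma delta_d1 Xi Z :
  Delta mu q (d1 bg mu rho01 r w) Xi Z = Tt Xi Z + C1 Xi Z + C2 Xi Z.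
Proof.
rewrite /Tt /C1 /C2 -!big_split /Delta; apply: eq_bigr => j _.
by rewrite d1_pcons scalerDr scalerDr.
Qed.

Lemma fin1 Xi Z : r = 1%N ->
  d1_0 rho1 (Delta_1 mu phi q w) Xi Z + C1 Xi Z = 0 /\ C2 Xi Z = 0.
Proof.
move=> r1; split.
  rewrite /d1_0 /Delta_1 /C1 (blsumr hrho1) -big_split /=.
  apply: big1 => j _; rewrite (blZr hrho1) -scalerDr.
  have -> : \sum_(k < r) sgn K k.+1 *: rho01 (mu (Z k))
     (w (fun i => face mu 0 (rem1 Xi j i)) (pcons (x0 (Xi j)) (rem1 Z k)))
   = - rho1 (Z 0%N) (phi (w (fun i => face mu 0 (rem1 Xi j i)) (pcons (x0 (Xi j)) (fun _ => 0)))).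
    move: (w (fun i => face mu 0 (rem1 Xi j i))) (wextr hw (fun i => face mu 0 (rem1 Xi j i))) => F hF.
    rewrite -rho01_mu (hF (pcons (x0 (Xi j)) (fun _ => 0)) (pcons (x0 (Xi j)) (rem1 Z 0))).
      by move: hF; rewrite r1 => _; rewrite big_ord1 /= sgnS sgn0 scaleN1r.
    by rewrite r1 => -[|i].
  by rewrite subrr scaler0.
rewrite /C2; apply: big1 => j _; move: (w _); rewrite r1 => F.
by rewrite big_ord1 big_ord1_cond /= scaler0.
Qed.

Lemma fin2 Xi Z : (1 < r)%N -> forall r', r = r'.+1 ->
  d1 bg mu rho01 r' (Delta mu q w) Xi Z + C1 Xi Z + C2 Xi Z = 0.
Proof.
move=> r2 r' er; rewrite /d1 -er /Delta /C1 /C2.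
rewrite -addrA addrACA.
have -> : \sum_(k < r) sgn K k *: rho01 (mu (Z k)) (\sum_(j < q.+1) sgn K j *:
      w (fun i => face mu 0 (rem1 Xi j i)) (pcons (x0 (Xi j)) (rem1 Z k)))
   = - \sum_(j < q.+1) sgn K j *: \sum_(k < r) sgn K k.+1 *: rho01 (mu (Z k))
     (w (fun i => face mu 0 (rem1 Xi j i)) (pcons (x0 (Xi j)) (rem1 Z k))).
  rewrite -sumrN.
  under eq_bigr => k _ do rewrite (blsumr hrho01) scaler_sumr.
  rewrite exchange_big; apply: eq_bigr => j _.
  rewrite -scalerN -sumrN scaler_sumr; apply: eq_bigr => k _.
  by rewrite (blZr hrho01) !scalerA sgnS scaleNr opprK scalerA mulrC.
have -> : \sum_(a < r) \sum_(b < r | (a < b)%N) sgn K (a + b) *: (\sum_(j < q.+1) sgn K j *: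
      w (fun i => face mu 0 (rem1 Xi j i)) (pcons (x0 (Xi j)) (pcons (bg (Z a) (Z b)) (rem2 Z a b))))
   = - \sum_(j < q.+1) sgn K j *: \sum_(a < r) \sum_(b < r | (a < b)%N) sgn K (a + b) *:
     w (fun i => face mu 0 (rem1 Xi j i))
       (pcons (bg (Z a) (Z b)) (pcons (x0 (Xi j)) (rem2 Z a b))).
  rewrite -sumrN.
  under eq_bigr => a _ do under eq_bigr => b _ do rewrite scaler_sumr.
  under eq_bigr => a _ do rewrite exchange_big.
  rewrite exchange_big; apply: eq_bigr => j _.
  rewrite -scalerN -sumrN scaler_sumr; apply: eq_bigr => a _.
  rewrite -sumrN scaler_sumr; apply: eq_bigr => b _.
  by rewrite (w_swap01 _ _ _ _ r2) !scalerN !scalerA mulrC.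
by rewrite !addNr addr0.
Qed.
End Main.

Unset Implicit Arguments. Set Strict Implicit.

Theorem mainTheorem10 (K : fieldType) (G H W V : lmodType K)
  (bg : G -> G -> G) (bh : H -> H -> H) (mu : G -> H) (L : H -> G -> G)
  (phi : W -> V) (rho01 : H -> W -> W) (rho00 : H -> V -> V)
  (rho1 : G -> V -> W) :
  crossed_module bg bh mu L ->
  two_rep bg bh mu L phi rho01 rho00 rho1 ->
  forall (p q r : nat), (1 <= r)%N ->
  forall w : cochain G H W p, is_cochain q r w ->
  forall (Xi : nat -> Gp G H p.+1) (Z : nat -> G),
    delta_r bg bh mu L rho01 q r (pdiff mu w) Xi Z
      - pdiff mu (delta_r bg bh mu L rho01 q r w) Xi Z
    = (if r == 1%N
       then d1_0 rho1 (Delta_1 mu phi q w) Xi Z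
       else d1 bg mu rho01 r.-1 (Delta mu q w) Xi Z)
      + Delta mu q (d1 bg mu rho01 r w) Xi Z.
Proof.
move=> [[lg lh] [hmu mu_hom] [hL _ _] mu_L L_mu].
move=> [[hphi [[hrho01 _] [_ hrho1]]] _ _ [_ rho01_mu] _] p q r r1 w hw Xi Z.
have bg_anti := lie_anti lg; have bh_anti := lie_anti lh.
have hbg : is_bilin bg by case: lg.
have hbh : is_bilin bh by case: lh.
rewrite lhs_red // (delta_d1 _ L_mu hw).
case: r r1 w hw => [//|[|r']] _ w hw /=.
  have [e1 e2] := fin1 bg hrho1 rho01_mu hw Xi Z erefl.
  exact: fin_alg1 e1 e2.
apply: fin_alg; exact: (fin2 bg mu hrho01 hw Xi Z (isT : (1 < r'.+2)%N) (erefl _)).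
Qed.
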